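(* Every non-identity element of $X$ has infinitely many conjugates in $X$. Consequently, for every field $F$, the centre of the group algebra $FX$ (finite $F$-linear combinations of elements of $X$) is one-dimensional, equal to $F\cdot 1$.
   Context: Let $p$ and $q$ be distinct odd primes. Let $m$ be the smallest positive integer such that $p$ divides $|\mathrm{Sp}(2m,q)|$, and $n$ the smallest positive integer such that $q$ divides $|\mathrm{Sp}(2n,p)|$. Let $Q$ be an extraspecial $q$-group of order $q^{2m+1}$ and exponent $q$, and let $A = Q\rtimes\langle \alpha\rangle$ where $\alpha$ has order $p$, acts trivially on $Z(Q)$ and faithfully on $Q/Z(Q)$. Let $P$ be an extraspecial $p$-group of order $p^{2n+1}$ and exponent $p$, and let $B = P\rtimes\langle\beta\rangle$ where $\beta$ has order $q$, acts trivially on $Z(P)$ and faithfully on $P/Z(P)$. Then $C_A = Z(Q)\times\langle\alpha\rangle$ is a cyclic self-normalizing (nilpotent) subgroup of $A$ of order $pq$, and $C_B = Z(P)\times\langle \beta\rangle$ is a cyclic self-normalizing subgroup of $B$ of order $pq$. Let $X = A *_C B$ be the free product of $A$ and $B$ amalgamated along an isomorphism $C_A\to C_B$ (which necessarily maps $\langle\alpha\rangle$ onto $Z(P)$ and $Z(Q)$ onto $\langle\beta\rangle$); regard $A$, $B$ as subgroups of $X$ with $A\cap B = C = Z(P)\times Z(Q)$. *)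

(* Defs.v *)
From HB Require Import structures.
From mathcomp Require Import all_boot all_order all_algebra all_fingroup all_solvable.
Set Implicit Arguments. Unset Strict Implicit. Unset Printing Implicit Defensive.
Import GRing.Theory.

Definition is_group (T : Type) (mul : T -> T -> T) (one : T) (inv : T -> T) : Prop :=
  [/\ forall x y z, mul x (mul y z) = mul (mul x y) z,
      forall x, mul one x = x,
      forall x, mul x one = x,
      forall x, mul (inv x) x = one &
      forall x, mul x (inv x) = one].

Definition fin_hom (gT : finGroupType) (A : {set gT}) (T : Type)
  (mul : T -> T -> T) (f : gT -> T) : Prop :=
  {in A &, forall x y, f (x * y)%g = mul (f x) (f y)}.

Definition abs_hom (T U : Type) (mulT : T -> T -> T) (mulU : U -> U -> U)
  (h : T -> U) : Prop := forall x y, h (mulT x y) = mulU (h x) (h y).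

Definition is_amalgamated_product (gT hT : finGroupType)
  (A CA : {set gT}) (B : {set hT}) (phi : gT -> hT)
  (X : Type) (mul : X -> X -> X) (one : X) (inv : X -> X)
  (iA : gT -> X) (iB : hT -> X) : Prop :=
  [/\ is_group mul one inv,
      fin_hom A mul iA,
      fin_hom B mul iB,
      {in CA, forall c, iA c = iB (phi c)} &
      forall (G : Type) (gm : G -> G -> G) (g1 : G) (gi : G -> G),
        is_group gm g1 gi ->
        forall (fA : gT -> G) (fB : hT -> G),
          fin_hom A gm fA -> fin_hom B gm fB ->
          {in CA, forall c, fA c = fB (phi c)} ->
          (exists h : X -> G, [/\ abs_hom mul gm h,
                                 {in A, forall a, h (iA a) = fA a} &
                                 {in B, forall b, h (iB b) = fB b}]) /\
          (forall h1 h2 : X -> G,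
              abs_hom mul gm h1 -> {in A, forall a, h1 (iA a) = fA a} ->
              {in B, forall b, h1 (iB b) = fB b} ->
              abs_hom mul gm h2 -> {in A, forall a, h2 (iA a) = fA a} ->
              {in B, forall b, h2 (iB b) = fB b} ->
              forall x, h1 x = h2 x)].

Definition infinite_conj_class (X : eqType) (mul : X -> X -> X) (inv : X -> X)
  (x : X) : Prop :=
  ~ exists s : seq X, forall g : X, mul (inv g) (mul x g) \in s.

(* An element of FX is represented by a formal finite sum \sum_i c_i x_i,
   given as a list of pairs (c_i, x_i); two representatives denote the same
   element of FX iff they have the same coefficient function. *)
Definition ga_coef (F : fieldType) (X : eqType) (s : seq (F * X)) (x : X) : F :=
  \sum_(u <- s) (if u.2 == x then u.1 else 0).

Definition ga_mul (F : fieldType) (X : eqType) (mul : X -> X -> X)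
  (s t : seq (F * X)) : seq (F * X) :=
  [seq ((u.1 * v.1)%R, mul u.2 v.2) | u <- s, v <- t].

Definition ga_central (F : fieldType) (X : eqType) (mul : X -> X -> X)
  (z : seq (F * X)) : Prop :=
  forall t : seq (F * X), ga_coef (ga_mul mul z t) =1 ga_coef (ga_mul mul t z).

Local Open Scope ring_scope.
Definition sympJ (n q : nat) : 'M['F_q]_(n + n) :=
  block_mx 0 1%:M (- 1%:M) 0.

Definition Sp (n q : nat) : {set 'M['F_q]_(n + n)} :=
  [set M : 'M['F_q]_(n + n) | M^T *m sympJ n q *m M == sympJ n q].

Definition least_Sp_index (p q m : nat) : Prop :=
  [/\ (0 < m)%N, (p %| #|Sp m q|)%N &
      forall k, (0 < k < m)%N -> ~~ (p %| #|Sp k q|)%N].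

(* x acts (by conjugation) faithfully on Q/Z(Q): no nontrivial element of
   <[x]> centralises Q modulo Z(Q) *)
Definition faithful_on_frattini_quot (gT : finGroupType) (Q : {group gT}) (x : gT) : Prop :=
  (forall a, a \in <[x]> -> [~: Q, <[a]>] \subset 'Z(Q) -> a = 1)%g.

(* Main.v *)
Require Import Defs.
From HB Require Import structures.
From mathcomp Require Import all_boot all_order all_algebra all_fingroup all_solvable.
From Stdlib Require Import FunctionalExtensionality ProofIrrelevance.
Set Implicit Arguments. Unset Strict Implicit. Unset Printing Implicit Defensive.

Section AbsGroup.
Variables (X : Type) (mul : X -> X -> X) (one : X) (inv : X -> X).
Hypothesis Hg : is_group mul one inv.

Lemma gA x y z : mul x (mul y z) = mul (mul x y) z.
Proof. by case: Hg. Qed.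
Lemma g1x x : mul one x = x. Proof. by case: Hg. Qed.
Lemma gx1 x : mul x one = x. Proof. by case: Hg. Qed.
Lemma gVx x : mul (inv x) x = one. Proof. by case: Hg. Qed.
Lemma gxV x : mul x (inv x) = one. Proof. by case: Hg. Qed.

Lemma gcanl x y z : mul x y = mul x z -> y = z.
Proof.
move=> e; rewrite -(g1x y) -(g1x z) -(gVx x) -!gA; congr (mul _ _); exact: e.
Qed.
Lemma gKl x y : mul (inv x) (mul x y) = y.
Proof. by rewrite gA gVx g1x. Qed.
Lemma gKr x y : mul x (mul (inv x) y) = y.
Proof. by rewrite gA gxV g1x. Qed.
Lemma gKVr x y : mul (mul y x) (inv x) = y.
Proof. by rewrite -gA gxV gx1. Qed.
Lemma gKr' x y : mul (mul y (inv x)) x = y.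
Proof. by rewrite -gA gVx gx1. Qed.
Lemma ginv_uniq x y : mul x y = one -> inv x = y.
Proof. by move=> e; apply: (@gcanl x); rewrite gxV e. Qed.
Lemma ginvK x : inv (inv x) = x.
Proof. exact/ginv_uniq/gVx. Qed.
Lemma ginvM x y : inv (mul x y) = mul (inv y) (inv x).
Proof. apply: ginv_uniq; by rewrite -gA (gA y) gxV g1x gxV. Qed.
Lemma ginv1 : inv one = one.
Proof. exact/ginv_uniq/g1x. Qed.
Lemma gcanr x y z : mul y x = mul z x -> y = z.
Proof. by move=> e; rewrite -(gKVr x y) e gKVr. Qed.
End AbsGroup.

Lemma hom_one (T U : Type) (mT : T -> T -> T) (oT : T) (iT : T -> T)
  (mU : U -> U -> U) (oU : U) (iU : U -> U) (h : T -> U) :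
  is_group mT oT iT -> is_group mU oU iU -> abs_hom mT mU h -> h oT = oU.
Proof.
move=> HT HU hh; apply: (gcanl HU (x := h oT)).
by rewrite -hh (g1x HT) (gx1 HU).
Qed.


Section GroupAlgebra.
Variables (X : eqType) (mul : X -> X -> X) (one : X) (inv : X -> X).
Hypothesis Hg : is_group mul one inv.
Hypothesis icc : forall x : X, x <> one -> infinite_conj_class mul inv x.
Import GRing.Theory.
Local Open Scope ring_scope.

Lemma ga_coef_mul (F : fieldType) (s t : seq (F * X)) x :
  ga_coef (ga_mul mul s t) x =
  \sum_(u <- s) \sum_(v <- t) (if mul u.2 v.2 == x then u.1 * v.1 else 0).
Proof. by rewrite /ga_coef /ga_mul big_allpairs_dep. Qed.

Lemma ga_coef_mulL (F : fieldType) (s t : seq (F * X)) x :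
  ga_coef (ga_mul mul s t) x = \sum_(v <- t) ga_coef s (mul x (inv v.2)) * v.1.
Proof.
rewrite ga_coef_mul exchange_big /=; apply: eq_bigr => v _.
rewrite /ga_coef mulr_suml; apply: eq_bigr => u _.
have -> : (mul u.2 v.2 == x) = (u.2 == mul x (inv v.2)).
  apply/eqP/eqP => [<-|->]; [by rewrite (gKVr Hg) | by rewrite (gKr' Hg)].
by case: ifP => _; rewrite ?mul0r.
Qed.

Lemma ga_coef_mulR (F : fieldType) (s t : seq (F * X)) x :
  ga_coef (ga_mul mul t s) x = \sum_(v <- t) v.1 * ga_coef s (mul (inv v.2) x).
Proof.
rewrite ga_coef_mul; apply: eq_bigr => v _.
rewrite /ga_coef mulr_sumr; apply: eq_bigr => u _.
have -> : (mul v.2 u.2 == x) = (u.2 == mul (inv v.2) x).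
  apply/eqP/eqP => [<-|->]; [by rewrite (gKl Hg) | by rewrite (gKr Hg)].
by case: ifP => _; rewrite ?mulr0.
Qed.

Lemma ga_coef_nz (F : fieldType) (s : seq (F * X)) x :
  ga_coef s x != 0 -> x \in map snd s.
Proof.
apply: contraR => nx; rewrite /ga_coef big1_seq // => u /andP[_ us].
case: eqP => // ex; case/negP: nx; rewrite -ex; exact: map_f.
Qed.

Lemma ga_coef_one (F : fieldType) (c : F) x :
  ga_coef [:: (c, one)] x = if one == x then c else 0.
Proof. by rewrite /ga_coef big_seq1. Qed.

Lemma ga_center (F : fieldType) (z : seq (F * X)) :
  ga_central mul z <-> exists c : F, ga_coef z =1 ga_coef [:: (c, one)].
Proof.
split=> [cz | [c cz] t x].
  have inv_conj y g : ga_coef z (mul g (mul y (inv g))) = ga_coef z y.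
    have := cz [:: (1, g)] (mul g y).
    rewrite ga_coef_mulL ga_coef_mulR !big_seq1 /= mulr1 mul1r => e.
    by rewrite (gA Hg) e (gKl Hg).
  exists (ga_coef z one) => y; rewrite ga_coef_one.
  case: eqP => [<- // | ny].
  apply/eqP; apply: contraT => nz; case: (icc (nesym ny)).
  exists (map snd z) => g; apply: ga_coef_nz.
  by have := inv_conj y (inv g); rewrite (ginvK Hg) => ->.
rewrite ga_coef_mulL ga_coef_mulR; apply: eq_bigr => v _.
rewrite !cz !ga_coef_one mulrC.
have -> : (one == mul x (inv v.2)) = (one == mul (inv v.2) x); last by [].
apply/eqP/eqP => e.
  have : x = v.2 by rewrite -(gKr' Hg v.2 x) -e (g1x Hg).
  by move=> ->; rewrite (gVx Hg).
have : x = v.2 by rewrite -(gKr Hg v.2 x) -e (gx1 Hg).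
by move=> ->; rewrite (gxV Hg).
Qed.
End GroupAlgebra.

Section Words.
Variables (gT hT : finGroupType) (A CA : {group gT}) (B CB : {group hT}).
Variable phi : {morphism CA >-> hT}.
Hypotheses (isoC : isom CA CB phi) (sCA : CA \subset A) (sCB : CB \subset B).
Local Open Scope group_scope.

Lemma injphi : 'injm phi. Proof. by case/isomP: isoC. Qed.
Lemma imphi : phi @* CA = CB. Proof. by case/isomP: isoC. Qed.
Definition psi := invm injphi.

Lemma phi_CB c : c \in CA -> phi c \in CB.
Proof. by move=> Hc; rewrite -imphi mem_morphim. Qed.
Lemma psi_phi c : c \in CA -> psi (phi c) = c.
Proof. exact: invmE. Qed.
Lemma phi_psi d : d \in CB -> phi (psi d) = d.
Proof. by rewrite -imphi; exact: invmK. Qed.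
Lemma psi_CA d : d \in CB -> psi d \in CA.
Proof. by rewrite -imphi => /morphimP[c Dc Cc ->]; rewrite psi_phi. Qed.

Section Reps.
Variables (rT : finGroupType) (G C : {group rT}).
Hypothesis sCG : C \subset G.
Definition rep (e : rT) := repr (C :* e).
Lemma rep_eq e : exists2 c, c \in C & rep e = c * e.
Proof. by have /rcosetP[c Cc] := mem_repr_rcoset C e; exists c. Qed.
Lemma rep_headC e : e * (rep e)^-1 \in C.
Proof. by have [c Cc ->] := rep_eq e; rewrite invMg mulgA mulgV mul1g groupV. Qed.
Lemma rep_id e : rep (rep e) = rep e.
Proof. rewrite /rep. rewrite rcoset_repr. done. Qed.
Lemma rep_CM c e : c \in C -> rep (c * e) = rep e.
Proof. by move=> Cc; rewrite /rep rcosetM (rcoset_id Cc). Qed.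
Lemma rep_C c : c \in C -> rep c = 1.
Proof. by move=> Cc; rewrite /rep rcoset_id // repr_group. Qed.
Lemma rep1 e : rep e = 1 -> e \in C.
Proof. by have [c Cc ->] := rep_eq e => /eqP; rewrite -eq_invg_mul => /eqP <-; rewrite groupV. Qed.
Lemma rep_G e : e \in G -> rep e \in G.
Proof. by have [c Cc ->] := rep_eq e => Ge; rewrite groupM // (subsetP sCG). Qed.
End Reps.

Definition rA := rep CA.
Definition rB := rep CB.

Definition Letter := (gT + hT)%type.
Definition side (x : Letter) : bool := if x is inl _ then true else false.
Definition sideR (x y : Letter) := side x != side y.
Definition altw (P : pred Letter) (l : seq Letter) :=
  all P l && (if l is x :: l' then path sideR x l' else true).

Lemma altw_cons P x l : altw P (x :: l) =
  [&& P x, altw P l & (if l is y :: _ then side x != side y else true)].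
Proof.
case: l => [|y l]; rewrite /altw /= ?andbT //.
rewrite /sideR -!andbA; do 3!congr andb; exact: andbC.
Qed.

Definition goodL (x : Letter) : bool :=
  match x with
  | inl t => [&& t \in A, rA t == t & t != 1]
  | inr t => [&& t \in B, rB t == t & t != 1]
  end.

Definition wf (w : gT * seq Letter) := (w.1 \in CA) && altw goodL w.2.
Definition noA (l : seq Letter) := if l is inl _ :: _ then false else true.
Definition noB (l : seq Letter) := if l is inr _ :: _ then false else true.

Definition decA (w : gT * seq Letter) : gT * seq Letter :=
  match w with (c, inl t :: l) => (c * t, l) | _ => w end.
Definition comA (e : gT) (l : seq Letter) : gT * seq Letter :=
  (e * (rA e)^-1, if rA e == 1 then l else inl (rA e) :: l).
Definition actA a w := comA (a * (decA w).1) (decA w).2.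

Definition decB (w : gT * seq Letter) : hT * seq Letter :=
  match w with (c, inr t :: l) => (phi c * t, l) | (c, l) => (phi c, l) end.
Definition comB (e : hT) (l : seq Letter) : gT * seq Letter :=
  (psi (e * (rB e)^-1), if rB e == 1 then l else inr (rB e) :: l).
Definition actB b w := comB (b * (decB w).1) (decB w).2.

Lemma decA_prop w : wf w ->
  [/\ (decA w).1 \in A, altw goodL (decA w).2 & noA (decA w).2].
Proof.
case: w => c [|[t|t] l] /andP[/= Cc] al; have Ac := subsetP sCA _ Cc => //.
move: al; rewrite altw_cons /= => /and3P[/and3P[At _ _] al hd]; split => //.
  by rewrite groupM.
by case: l hd {al} => [|[y|y] l].
Qed.

Lemma decB_prop w : wf w ->
  [/\ (decB w).1 \in B, altw goodL (decB w).2 & noB (decB w).2].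
Proof.
case: w => c [|[t|t] l] /andP[/= Cc] al; have Bc := subsetP sCB _ (phi_CB Cc) => //.
move: al; rewrite altw_cons /= => /and3P[/and3P[At _ _] al hd]; split => //.
  by rewrite groupM.
by case: l hd {al} => [|[y|y] l].
Qed.

Lemma comA_wf e l : e \in A -> altw goodL l -> noA l -> wf (comA e l).
Proof.
move=> Ae al nl; rewrite /wf /comA /= rep_headC /=.
case: eqP => // r1; rewrite altw_cons al /= rep_G // /rA rep_id eqxx /=.
by apply/andP; split; [apply/eqP | case: l nl {al} => [|[y|y] l]].
Qed.

Lemma comB_wf e l : e \in B -> altw goodL l -> noB l -> wf (comB e l).
Proof.
move=> Be al nl; rewrite /wf /comB /= psi_CA ?rep_headC //=.
case: eqP => // r1; rewrite altw_cons al /= rep_G // /rB rep_id eqxx /=.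
by apply/andP; split; [apply/eqP | case: l nl {al} => [|[y|y] l]].
Qed.

Lemma decA_comA e l : noA l -> decA (comA e l) = (e, l).
Proof.
rewrite /comA; case: eqP => [-> | _] nl /=; last by rewrite mulgKV.
by rewrite invg1 mulg1; case: l nl => [|[y|y] l].
Qed.

Lemma decB_comB e l : e \in B -> noB l -> decB (comB e l) = (e, l).
Proof.
move=> Be; have hC := rep_headC CB e.
rewrite /comB; case: eqP => [r1 | _] nl /=.
  by rewrite phi_psi // r1 invg1 mulg1; case: l nl => [|[y|y] l].
by rewrite phi_psi // mulgKV.
Qed.

Lemma comA_decA w : wf w -> comA (decA w).1 (decA w).2 = w.
Proof.
case: w => c [|[t|t] l] /andP[/= Cc]; rewrite /comA /=.
- by rewrite /rA rep_C // eqxx invg1 mulg1.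
- rewrite altw_cons => /and3P[/and3P[_ /eqP rt nt] _ _].
  by rewrite /rA rep_CM // -/(rA t) rt (negPf nt) mulgK.
- by rewrite /rA rep_C // eqxx invg1 mulg1.
Qed.

Lemma comB_decB w : wf w -> comB (decB w).1 (decB w).2 = w.
Proof.
case: w => c [|[t|t] l] /andP[/= Cc]; rewrite /comB /=.
- by rewrite /rB rep_C ?phi_CB // eqxx invg1 mulg1 psi_phi.
- by rewrite /rB rep_C ?phi_CB // eqxx invg1 mulg1 psi_phi.
- rewrite altw_cons => /and3P[/and3P[_ /eqP rt nt] _ _].
  by rewrite /rB rep_CM ?phi_CB // -/(rB t) rt (negPf nt) mulgK psi_phi.
Qed.

Lemma actA_wf a w : a \in A -> wf w -> wf (actA a w).
Proof. by move=> Aa /decA_prop[Ad ald nd]; apply: comA_wf => //; rewrite groupM. Qed.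
Lemma actB_wf b w : b \in B -> wf w -> wf (actB b w).
Proof. by move=> Bb /decB_prop[Bd ald nd]; apply: comB_wf => //; rewrite groupM. Qed.

Lemma actA1 w : wf w -> actA 1 w = w.
Proof. by move=> ww; rewrite /actA mul1g comA_decA. Qed.
Lemma actB1 w : wf w -> actB 1 w = w.
Proof. by move=> ww; rewrite /actB mul1g comB_decB. Qed.

Lemma actAM a a' w : wf w -> actA (a * a') w = actA a (actA a' w).
Proof.
move=> /decA_prop[_ _ nd]; by rewrite /actA [decA (comA _ _)]decA_comA //= mulgA.
Qed.
Lemma actBM b b' w : b' \in B -> wf w -> actB (b * b') w = actB b (actB b' w).
Proof.
move=> Bb' /decB_prop[Bd _ nd].
by rewrite /actB [decB (comB _ _)]decB_comB ?groupM //= mulgA.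
Qed.

Lemma actAB c w : c \in CA -> wf w -> actA c w = actB (phi c) w.
Proof.
move=> Cc; case: w => c0 [|[t|t] l] /andP[/= Cc0 al]; rewrite /actA /actB /comA /comB /=.
- rewrite /rA /rB !rep_C ?groupM ?phi_CB // !eqxx !invg1 !mulg1.
  by rewrite -morphM ?psi_phi ?groupM.
- move: al; rewrite altw_cons /= => /and3P[/and3P[_ /eqP rt nt] _ _].
  rewrite /rA mulgA rep_CM ?groupM // -/(rA t) rt (negPf nt) mulgK.
  rewrite /rB rep_C ?groupM ?phi_CB // eqxx invg1 mulg1.
  by rewrite -morphM ?psi_phi ?groupM.
- move: al; rewrite altw_cons /= => /and3P[/and3P[_ /eqP rt nt] _ _].
  rewrite /rA rep_C ?groupM // eqxx invg1 mulg1.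
  rewrite /rB mulgA rep_CM ?groupM ?phi_CB // -/(rB t) rt (negPf nt) mulgK.
  by rewrite -morphM ?psi_phi ?groupM.
Qed.


Definition W := {w : gT * seq Letter | wf w}.

Record Bij := MkBij { bf : W -> W; bg : W -> W; bfg : cancel bf bg; bgf : cancel bg bf }.

Lemma Bij_eq (x y : Bij) : bf x =1 bf y -> x = y.
Proof.
case: x => f1 g1 fg1 gf1; case: y => f2 g2 fg2 gf2 /= e.
have ef := functional_extensionality _ _ e; subst f2.
have eg : g1 = g2.
  by apply: functional_extensionality => w; apply: (can_inj fg1); rewrite gf1 gf2.
subst g2; have -> : fg1 = fg2 by exact: proof_irrelevance.
by have -> : gf1 = gf2 by exact: proof_irrelevance.
Qed.

Definition Gmul (x y : Bij) : Bij :=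
  MkBij (can_comp (bfg x) (bfg y)) (can_comp (bgf y) (bgf x)).
Definition Gone : Bij := @MkBij id id (fun _ => erefl) (fun _ => erefl).
Definition Ginv (x : Bij) : Bij := MkBij (bgf x) (bfg x).

Lemma Bij_group : is_group Gmul Gone Ginv.
Proof.
split=> *; apply: Bij_eq => w //=; [exact: bfg | exact: bgf].
Qed.

Definition actA' a w := if a \in A then actA a w else w.
Definition actB' b w := if b \in B then actB b w else w.
Lemma actA'_wf a w : wf w -> wf (actA' a w).
Proof. by rewrite /actA'; case: ifP => // Aa; exact: actA_wf. Qed.
Lemma actB'_wf b w : wf w -> wf (actB' b w).
Proof. by rewrite /actB'; case: ifP => // Bb; exact: actB_wf. Qed.

Definition liftA a (w : W) : W := exist _ (actA' a (val w)) (actA'_wf a (valP w)).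
Definition liftB b (w : W) : W := exist _ (actB' b (val w)) (actB'_wf b (valP w)).

Lemma liftAK a : cancel (liftA a) (liftA a^-1).
Proof.
move=> w; apply: val_inj; rewrite /= /actA' groupV.
case: ifP => Aa; last by rewrite Aa. rewrite Aa -actAM ?valP // mulVg actA1 //; exact: valP.
Qed.
Lemma liftBK b : cancel (liftB b) (liftB b^-1).
Proof.
move=> w; apply: val_inj; rewrite /= /actB' groupV.
case: ifP => Bb; last by rewrite Bb. rewrite Bb -actBM ?valP ?groupV // mulVg actB1 //; exact: valP.
Qed.
Lemma liftAK' a : cancel (liftA a^-1) (liftA a).
Proof. by have := liftAK a^-1; rewrite invgK. Qed.
Lemma liftBK' b : cancel (liftB b^-1) (liftB b).
Proof. by have := liftBK b^-1; rewrite invgK. Qed.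

Definition bfA a : Bij := MkBij (liftAK a) (liftAK' a).
Definition bfB b : Bij := MkBij (liftBK b) (liftBK' b).

Lemma bfA_hom : fin_hom A Gmul bfA.
Proof.
move=> a a' Aa Aa'; apply: Bij_eq => w; apply: val_inj.
by rewrite /= /actA' groupM // Aa Aa' actAM //; exact: valP.
Qed.
Lemma bfB_hom : fin_hom B Gmul bfB.
Proof.
move=> b b' Bb Bb'; apply: Bij_eq => w; apply: val_inj.
by rewrite /= /actB' groupM // Bb Bb' actBM //; exact: valP.
Qed.
Lemma bfAB : {in CA, forall c, bfA c = bfB (phi c)}.
Proof.
move=> c Cc; apply: Bij_eq => w; apply: val_inj.
rewrite /= /actA' /actB' (subsetP sCA _ Cc) (subsetP sCB _ (phi_CB Cc)).
by apply: actAB => //; exact: valP.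
Qed.

Section XSide.
Variables (X : eqType) (mul : X -> X -> X) (one : X) (inv : X -> X)
  (iA : gT -> X) (iB : hT -> X).
Hypothesis amal : is_amalgamated_product A CA B phi mul one inv iA iB.

Lemma CA_A c : c \in CA -> c \in A. Proof. exact: (subsetP sCA). Qed.
Lemma CB_B c : c \in CB -> c \in B. Proof. exact: (subsetP sCB). Qed.

Lemma Hg : is_group mul one inv. Proof. by case: amal. Qed.
Lemma iA_hom : fin_hom A mul iA. Proof. by case: amal. Qed.
Lemma iB_hom : fin_hom B mul iB. Proof. by case: amal. Qed.
Lemma iAB c : c \in CA -> iA c = iB (phi c). Proof. by case: amal => _ _ _ H _; apply: H. Qed.

Lemma iA1 : iA 1 = one.
Proof. by apply: (gcanl Hg (x := iA 1)); rewrite -iA_hom // mulg1 (gx1 Hg). Qed.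
Lemma iB1 : iB 1 = one.
Proof. by apply: (gcanl Hg (x := iB 1)); rewrite -iB_hom // mulg1 (gx1 Hg). Qed.
Lemma iAV a : a \in A -> iA a^-1 = inv (iA a).
Proof. by move=> Aa; apply/esym/(ginv_uniq Hg); rewrite -iA_hom ?groupV // mulgV iA1. Qed.
Lemma iBV b : b \in B -> iB b^-1 = inv (iB b).
Proof. by move=> Bb; apply/esym/(ginv_uniq Hg); rewrite -iB_hom ?groupV // mulgV iB1. Qed.
Lemma iBA d : d \in CB -> iB d = iA (psi d).
Proof. by move=> Cd; rewrite iAB ?psi_CA // phi_psi. Qed.

Definition ev (x : Letter) : X := match x with inl a => iA a | inr b => iB b end.
Definition prodX (L : seq Letter) : X := foldr (fun x acc => mul (ev x) acc) one L.
Definition sylL (x : Letter) : bool :=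
  match x with inl a => (a \in A) && (a \notin CA) | inr b => (b \in B) && (b \notin CB) end.
Definition red L := altw sylL L.
Definition invL (x : Letter) : Letter :=
  match x with inl a => inl a^-1 | inr b => inr b^-1 end.

Lemma prodX_cat L1 L2 : prodX (L1 ++ L2) = mul (prodX L1) (prodX L2).
Proof. elim: L1 => [|x L1 IH] /=; first by rewrite (g1x Hg). by rewrite IH (gA Hg). Qed.
Lemma prodX_cons x L : prodX (x :: L) = mul (ev x) (prodX L). Proof. by []. Qed.
Lemma prodX1 x : prodX [:: x] = ev x.
Proof. by rewrite /= (gx1 Hg). Qed.
Lemma sylL_inv x : sylL (invL x) = sylL x.
Proof. by case: x => [a|b] /=; rewrite !groupV. Qed.
Lemma side_inv x : side (invL x) = side x. Proof. by case: x. Qed.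
Lemma ev_inv x : sylL x -> ev (invL x) = inv (ev x).
Proof. by case: x => [a|b] /= /andP[H _]; [exact: iAV | exact: iBV]. Qed.

Lemma red_cons x L : red (x :: L) = [&& sylL x, red L & (if L is y :: _ then side x != side y else true)].
Proof. exact: altw_cons. Qed.

Definition ev' (x : Letter) : X :=
  match x with inl a => if a \in A then iA a else one | inr b => if b \in B then iB b else one end.
Definition prodG (L : seq Letter) : X := foldr (fun x acc => mul (ev' x) acc) one L.
Definition Gen (x : X) := exists L, x = prodG L.

Lemma prodG_cat L1 L2 : prodG (L1 ++ L2) = mul (prodG L1) (prodG L2).
Proof. elim: L1 => [|x L1 IH] /=; first by rewrite (g1x Hg). by rewrite IH (gA Hg). Qed.
Lemma ev'_inv x : ev' (invL x) = inv (ev' x).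
Proof.
case: x => [a|b] /=; rewrite groupV; case: ifP => H; rewrite ?iAV ?iBV ?(ginv1 Hg) //.
Qed.
Lemma prodG_inv L : prodG (rev (map invL L)) = inv (prodG L).
Proof.
elim: L => [|x L IH] /=; first by rewrite (ginv1 Hg).
by rewrite rev_cons -cats1 prodG_cat IH /= (gx1 Hg) ev'_inv (ginvM Hg).
Qed.

Definition S := {x : X | Gen x}.
Lemma S_eq (x y : S) : proj1_sig x = proj1_sig y -> x = y.
Proof. case: x => x px; case: y => y py /= exy; subst y; f_equal; exact: proof_irrelevance. Qed.
Lemma GenM x y : Gen x -> Gen y -> Gen (mul x y).
Proof. by move=> [L1 ->] [L2 ->]; exists (L1 ++ L2); rewrite prodG_cat. Qed.
Lemma GenV x : Gen x -> Gen (inv x).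
Proof. by move=> [L ->]; exists (rev (map invL L)); rewrite prodG_inv. Qed.
Lemma Gen1 : Gen one. Proof. by exists [::]. Qed.
Lemma Gen_ev' x : Gen (ev' x). Proof. by exists [:: x]; rewrite /= (gx1 Hg). Qed.

Definition Smul (x y : S) : S := exist _ _ (GenM (proj2_sig x) (proj2_sig y)).
Definition Sone : S := exist _ _ Gen1.
Definition Sinv (x : S) : S := exist _ _ (GenV (proj2_sig x)).
Lemma S_group : is_group Smul Sone Sinv.
Proof.
split=> *; apply: S_eq => /=;
  [exact: (gA Hg) | exact: (g1x Hg) | exact: (gx1 Hg) | exact: (gVx Hg) | exact: (gxV Hg)].
Qed.
Definition sA a : S := exist _ _ (Gen_ev' (inl a)).
Definition sB b : S := exist _ _ (Gen_ev' (inr b)).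

Lemma all_Gen x : Gen x.
Proof.
case: amal => HX hA hB agr univ.
have sA_hom : fin_hom A Smul sA.
  by move=> a a' Aa Aa'; apply: S_eq => /=; rewrite groupM // Aa Aa' iA_hom.
have sB_hom : fin_hom B Smul sB.
  by move=> b b' Bb Bb'; apply: S_eq => /=; rewrite groupM // Bb Bb' iB_hom.
have sAB : {in CA, forall c, sA c = sB (phi c)}.
  move=> c Cc; apply: S_eq => /=.
  by rewrite (CA_A Cc) (CB_B (phi_CB Cc)) iAB.
have [[hs [hsh hsA hsB]] _] := univ S Smul Sone Sinv S_group sA sB sA_hom sB_hom sAB.
have [_ uniq] := univ X mul one inv HX iA iB hA hB agr.
have e : forall y, proj1_sig (hs y) = y.
  apply: (uniq (fun y => proj1_sig (hs y)) id) => //.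
  - by move=> y z; rewrite hsh.
  - by move=> a Aa /=; rewrite hsA //= Aa.
  - by move=> b Bb /=; rewrite hsB //= Bb.
by rewrite -(e x); exact: proj2_sig.
Qed.

Definition RS (x : X) :=
  (exists2 c, c \in CA & x = iA c) \/ (exists L, [/\ red L, L != [::] & x = prodX L]).

Lemma RS_one : RS one.
Proof. by left; exists 1; rewrite ?iA1. Qed.


Lemma stepA a x : a \in A -> RS x -> RS (mul (iA a) x).
Proof.
move=> Aa [[c Cc ->] | [L [rL nL ->]]].
  have Ac := CA_A Cc.
  rewrite -iA_hom //.
  case: (boolP (a * c \in CA)) => H; first by left; exists (a * c).
  right; exists [:: inl (a * c)]; rewrite prodX1 /= red_cons /= groupM //.
  by rewrite H.
case: L rL nL => [|[a1|b1] L] // rL _.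
- move: rL; rewrite red_cons /= => /and3P[/andP[Aa1 Ca1] rL hL].
  rewrite (gA Hg) -iA_hom //.
  case: (boolP (a * a1 \in CA)) => H; last first.
    right; exists (inl (a * a1) :: L); split => //.
    by rewrite red_cons /= groupM // H rL.
  case: L rL hL => [|[a2|b2] L] rL hL //.
    by left; exists (a * a1); rewrite // /= (gx1 Hg).
  move: rL; rewrite red_cons /= => /and3P[/andP[Bb2 Cb2] rL hL'].
  have Bp := CB_B (phi_CB H).
  right; exists (inr (phi (a * a1) * b2) :: L); split => //.
    rewrite red_cons /= groupM // rL hL' andbT.
    by rewrite (groupMl _ (phi_CB H)) ?Cb1 ?Cb2.
  by rewrite prodX_cons (gA Hg) iAB // -iB_hom.
- move: rL; rewrite red_cons /= => /and3P[/andP[Bb1 Cb1] rL hL].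
  case: (boolP (a \in CA)) => H.
    have Bp := CB_B (phi_CB H).
    right; exists (inr (phi a * b1) :: L); split => //.
      rewrite red_cons /= groupM // rL hL andbT.
      by rewrite (groupMl _ (phi_CB H)) ?Cb1 ?Cb2.
    by rewrite prodX_cons (gA Hg) iAB // -iB_hom.
  right; exists (inl a :: inr b1 :: L); split => //.
  by rewrite red_cons /= Aa H red_cons /= Bb1 Cb1 rL hL.
Qed.

Lemma stepB b x : b \in B -> RS x -> RS (mul (iB b) x).
Proof.
move=> Bb [[c Cc ->] | [L [rL nL ->]]].
  have Bc := CB_B (phi_CB Cc).
  rewrite iAB // -iB_hom //.
  case: (boolP (b * phi c \in CB)) => H.
    by left; exists (psi (b * phi c)); rewrite ?psi_CA // -iBA.
  right; exists [:: inr (b * phi c)]; rewrite prodX1 /= red_cons /= groupM //.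
  by rewrite H.
case: L rL nL => [|[a1|b1] L] // rL _.
- move: rL; rewrite red_cons /= => /and3P[/andP[Aa1 Ca1] rL hL].
  case: (boolP (b \in CB)) => H.
    have Ap := CA_A (psi_CA H).
    right; exists (inl (psi b * a1) :: L); split => //.
      rewrite red_cons /= groupM // rL hL andbT.
      by rewrite (groupMl _ (psi_CA H)) ?Ca1 ?Ca2.
    by rewrite prodX_cons (gA Hg) iBA // -iA_hom.
  right; exists (inr b :: inl a1 :: L); split => //.
  by rewrite red_cons /= Bb H red_cons /= Aa1 Ca1 rL hL.
- move: rL; rewrite red_cons /= => /and3P[/andP[Bb1 Cb1] rL hL].
  rewrite (gA Hg) -iB_hom //.
  case: (boolP (b * b1 \in CB)) => H; last first.
    right; exists (inr (b * b1) :: L); split => //.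
    by rewrite red_cons /= groupM // H rL.
  case: L rL hL => [|[a2|b2] L] rL hL //.
    by left; exists (psi (b * b1)); rewrite ?psi_CA // /= (gx1 Hg) iBA.
  move: rL; rewrite red_cons /= => /and3P[/andP[Aa2 Ca2] rL hL'].
  have Ap := CA_A (psi_CA H).
  right; exists (inl (psi (b * b1) * a2) :: L); split => //.
    rewrite red_cons /= groupM // rL hL' andbT.
    by rewrite (groupMl _ (psi_CA H)) ?Ca1 ?Ca2.
  by rewrite prodX_cons (gA Hg) iBA // -iA_hom.
Qed.

Lemma all_RS x : RS x.
Proof.
have [L ->] := all_Gen x; elim: L => [|[a|b] L IH] /=; first exact: RS_one.
  by case: ifP => Aa; [exact: stepA | rewrite (g1x Hg)].
by case: ifP => Bb; [exact: stepB | rewrite (g1x Hg)].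
Qed.

Lemma exists_h : exists h : X -> Bij,
  [/\ abs_hom mul Gmul h, {in A, forall a, h (iA a) = bfA a} & {in B, forall b, h (iB b) = bfB b}].
Proof.
case: amal => _ _ _ _ univ.
have [[h H] _] := univ Bij Gmul Gone Ginv Bij_group bfA bfB bfA_hom bfB_hom bfAB.
by exists h.
Qed.

Definition hd_side (l : seq Letter) := if l is x :: _ then Some (side x) else None.
Lemma noA_hd l : noA l = (hd_side l != Some true). Proof. by case: l => [|[]]. Qed.
Lemma noB_hd l : noB l = (hd_side l != Some false). Proof. by case: l => [|[]]. Qed.

Lemma actA_noA a w : wf w -> noA w.2 -> a \in A -> a \notin CA ->
  (actA a w).2 = inl (rA (a * w.1)) :: w.2.
Proof.
case: w => c l /andP[Cc _] nl Aa Ca; simpl in Cc, nl.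
have e : decA (c, l) = (c, l) by case: l nl => [|[]].
rewrite /actA e /comA /=; case: eqP => // /rep1 H.
by move: Ca; rewrite -(groupMr a Cc) H.
Qed.

Lemma actB_noB b w : wf w -> noB w.2 -> b \in B -> b \notin CB ->
  (actB b w).2 = inr (rB (b * phi w.1)) :: w.2.
Proof.
case: w => c l /andP[Cc _] nl Bb Cb; simpl in Cc, nl.
have e : decB (c, l) = (phi c, l) by case: l nl => [|[]].
rewrite /actB e /comB /=; case: eqP => // /rep1 H.
by move: Cb; rewrite -(groupMr b (phi_CB Cc)) H.
Qed.

Lemma w0_wf : wf (1, [::]). Proof. by rewrite /wf /= group1. Qed.
Definition w0 : W := exist _ (1, [::]) w0_wf.

Section WithH.
Variable h : X -> Bij.
Hypotheses (hh : abs_hom mul Gmul h) (hA : {in A, forall a, h (iA a) = bfA a})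
  (hB : {in B, forall b, h (iB b) = bfB b}).

Definition nf x := val (bf (h x) w0).

Lemma nf_red L : red L -> size (nf (prodX L)).2 = size L /\ hd_side (nf (prodX L)).2 = hd_side L.
Proof.
elim: L => [|s L IH].
  by rewrite /nf /= (hom_one Hg Bij_group hh).
rewrite red_cons => /and3P[ss rL hL]; have [IH1 IH2] := IH rL.
rewrite /nf prodX_cons hh /=; set w := bf (h (prodX L)) w0.
have ww : wf (val w) := valP w.
case: s ss hL => [a|b] /andP[Ss Cs] hL.
  rewrite hA //= /actA' Ss actA_noA //; first by rewrite /= IH1.
  by rewrite noA_hd IH2; case: L hL {IH IH1 IH2 rL w ww} => [|[]].
rewrite hB //= /actB' Ss actB_noB //; first by rewrite /= IH1.
by rewrite noB_hd IH2; case: L hL {IH IH1 IH2 rL w ww} => [|[]].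
Qed.
End WithH.

Definition conj g x := mul (inv g) (mul x g).
Lemma conj1 x : conj one x = x.
Proof. by rewrite /conj (ginv1 Hg) (g1x Hg) (gx1 Hg). Qed.
Lemma conjM g1 g2 x : conj (mul g1 g2) x = conj g2 (conj g1 x).
Proof. by rewrite /conj (ginvM Hg) -!(gA Hg). Qed.

Lemma red_path s L : red (s :: L) = all sylL (s :: L) && path sideR s L.
Proof. by []. Qed.

Hypothesis bigA : forall t : gT, exists2 u, u \in A & (u \notin CA) && (t * u^-1 \notin CA).
Hypothesis bigB : forall t : hT, exists2 u, u \in B & (u \notin CB) && (t * u^-1 \notin CB).
Hypothesis movC : forall c, c \in CA -> c != 1 ->
  (exists2 a, a \in A & c ^ a \notin CA) \/ (exists2 b, b \in B & phi c ^ b \notin CB).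

Lemma exist_syl (b : bool) : exists u, sylL u && (side u == b).
Proof.
case: b.
  by have [u Au /andP[Cu _]] := bigA 1; exists (inl u); rewrite /= Au Cu.
by have [u Bu /andP[Cu _]] := bigB 1; exists (inr u); rewrite /= Bu Cu.
Qed.

Lemma shift_syl t : sylL t -> exists u t',
  [/\ sylL u, sylL t', side u = side t, side t' = side t & mul (ev t) (inv (ev u)) = ev t'].
Proof.
case: t => [ta|tb] /andP[Tt _].
  have [u Au /andP[Cu Ct]] := bigA ta; exists (inl u), (inl (ta * u^-1)).
  by rewrite /= Au Cu groupM ?groupV // Ct -iAV // -iA_hom ?groupV.
have [u Bu /andP[Cu Ct]] := bigB tb; exists (inr u), (inr (tb * u^-1)).
by rewrite /= Bu Cu groupM ?groupV // Ct -iBV // -iB_hom ?groupV.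
Qed.

Lemma conj_start x : x != one -> exists g s L,
  [/\ red (s :: L), side s = side (last s L) & conj g x = prodX (s :: L)].
Proof.
move=> nx; case: (all_RS x) => [[c Cc ex] | [[|s L] [rL _ ex]] //].
  have nc : c != 1 by apply: contraNneq nx => c1; rewrite ex c1 iA1.
  have Ac := CA_A Cc.
  case: (movC Cc nc) => [[a Aa Cca] | [b Bb Cpb]].
    exists (iA a), (inl (c ^ a)), [::]; split => //.
      by rewrite red_cons /= groupJ // Cca.
    by rewrite prodX1 /= ex /conj -iAV // -!iA_hom ?groupV ?groupM // mulgA.
  have Bc := CB_B (phi_CB Cc).
  exists (iB b), (inr (phi c ^ b)), [::]; split => //.
    by rewrite red_cons /= groupJ // Cpb.
  by rewrite prodX1 /= ex iAB // /conj -iBV // -!iB_hom ?groupV ?groupM // mulgA.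
case: (boolP (side s == side (last s L))) => [/eqP hd | hd].
  by exists one, s, L; rewrite conj1.
case/lastP: L rL hd ex => [|M t] rL hd ex; first by rewrite eqxx in hd.
move: rL; rewrite red_path /= all_rcons rcons_path => /andP[/and3P[ss st aM] /andP[pM st']].
rewrite last_rcons in hd.
have [u [t' [su st'' sut stt e]]] := shift_syl st.
exists (ev (invL u)), u, (s :: rcons M t'); split.
- rewrite red_path /= all_rcons su ss aM st'' /= rcons_path pM /sideR.
  by rewrite sut eq_sym hd stt; exact: st'.
- by rewrite /= last_rcons stt sut.
- rewrite ex /conj ev_inv // (ginvK Hg) -cats1 -cat_cons !prodX_cat !prodX1.
  by rewrite -(gA Hg) e prodX_cons -(cats1 M) -cat_cons prodX_cat prodX1.
Qed.

Lemma conj_grow s L : red (s :: L) -> side s = side (last s L) -> forall k,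
  exists g s' L', [/\ red (s' :: L'), side s' = side (last s' L'), k <= size (s' :: L')
                   & conj g (prodX (s :: L)) = prodX (s' :: L')].
Proof.
move=> rL hd; elim=> [|k [g [s' [L' [rL' hd' hk e]]]]].
  by exists one, s, L; rewrite conj1.
have [u /andP[su /eqP sus]] := exist_syl (~~ side s').
exists (mul g (ev u)), (invL u), (s' :: rcons L' u); split.
- move: rL'; rewrite !red_path /= all_rcons sylL_inv su => /andP[/andP[-> ->] pL] /=.
  rewrite rcons_path pL /sideR side_inv sus -hd'.
  by case: (side s').
- by rewrite /= last_rcons side_inv.
- by rewrite /= size_rcons; apply: leq_trans hk _; rewrite /= ltnS leqnSn.
- by rewrite conjM e /conj -ev_inv // [in RHS]prodX_cons -cats1 -cat_cons prodX_cat prodX1.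
Qed.

Lemma ICC x : x <> one -> infinite_conj_class mul inv x.
Proof.
move=> /eqP nx [s0 Hs].
have [h [hh hA hB]] := exists_h.
have [g0 [s [L [rL hd e0]]]] := conj_start nx.
have [g [s' [L' [rL' _ hk e]]]] := conj_grow rL hd (\max_(y <- s0) size (nf h y).2).+1.
have := Hs (mul g0 g); rewrite -/(conj _ x) conjM e0 e => H.
have := @leq_bigmax_seq X s0 xpredT (fun y => size (nf h y).2) _ H isT.
have [-> _] := nf_red hh hA hB rL'.
by move=> H2; have := leq_trans hk H2; rewrite ltnn.
Qed.

End XSide.

End Words.

Section GroupFacts.
Variables (q m : nat) (gT : finGroupType) (Q A : {group gT}) (alpha : gT).
Hypotheses (pr_q : prime q) (m_gt0 : 0 < m) (exQ : extraspecial Q)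
  (ordQ : #|Q| = q ^ (m.*2.+1)) (defA : (Q ><| <[alpha]>)%g = A)
  (alpha_ZQ : alpha \in 'C('Z(Q))%g) (alpha_faithful : faithful_on_frattini_quot Q alpha).
Local Open Scope group_scope.

Let CA := 'Z(Q) <*> <[alpha]>.

Lemma CA_mul : CA = 'Z(Q) * <[alpha]>.
Proof. by apply: cent_joinEr; rewrite cycle_subG. Qed.

Lemma sCA_A : CA \subset A.
Proof.
have [nQA sHA _ _ _] := sdprod_context defA.
rewrite join_subG sHA andbT; apply: subset_trans (center_sub Q) _.
exact: normal_sub nQA.
Qed.

Lemma card_CA : (#|CA| <= q * #[alpha])%N.
Proof.
have qQ : q.-group Q by rewrite /pgroup ordQ pnatX pnat_id.
rewrite -(card_center_extraspecial qQ exQ) CA_mul.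
have := mul_cardG 'Z(Q) <[alpha]>; rewrite /order => ->.
by rewrite leq_pmulr // cardG_gt0.
Qed.

Lemma card_A : #|A| = (q ^ (m.*2.+1) * #[alpha])%N.
Proof. by rewrite -(sdprod_card defA) ordQ. Qed.

Lemma bigCA t : exists2 u, u \in A & (u \notin CA) && (t * u^-1 \notin CA).
Proof.
have : ~~ (A \subset CA :|: CA :* t).
  apply/negP => /subset_leq_card sA.
  have := leq_trans sA (leq_card_setU _ _); rewrite card_rcoset card_A.
  apply/negP; rewrite -ltnNge -addnn.
  apply: leq_ltn_trans (leq_add card_CA card_CA) _; rewrite addnn -mul2n mulnA.
  rewrite ltn_mul2r order_gt0 /= expnSr ltn_mul2r prime_gt0 //=.
  have q2 : 2 <= q by exact: prime_gt1.
  apply: (@leq_trans (2 ^ 2)) => //; apply: (@leq_trans (q ^ 2)); first by rewrite leq_exp2r.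
  by apply: leq_pexp2l; [exact: prime_gt0 | exact: (leq_add m_gt0 m_gt0)].
case/subsetPn => u Au; rewrite in_setU negb_or => /andP[Cu Ctu].
exists u => //; rewrite Cu /=; apply: contra Ctu => H.
by rewrite mem_rcoset -groupV invMg invgK.
Qed.

Lemma CA_Q : CA :&: Q = 'Z(Q).
Proof.
have [_ _ _ _ tI] := sdprod_context defA.
rewrite CA_mul -group_modl ?center_sub // setIC tI mulg1 //.
Qed.

Lemma comm_in_Z y g : y \in CA -> g \in Q -> y ^ g \in CA -> [~ g, y] \in 'Z(Q).
Proof.
move=> Cy Qg Cyg; rewrite -CA_Q inE; apply/andP; split.
  by rewrite commgEr conjVg groupM ?groupV.
have [nQA _ _ _ _] := sdprod_context defA.
have Ny : y \in 'N(Q) := subsetP (normal_norm nQA) y (subsetP sCA_A y Cy).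
by rewrite commgEl groupM ?groupV // memJ_norm.
Qed.

Lemma conj_stable_Z c : c \in CA -> {in A, forall a, c ^ a \in CA} -> c \in 'Z(Q).
Proof.
have [nQA _ _ _ _] := sdprod_context defA.
have sQA := normal_sub nQA.
move=> Cc stab; move: (Cc); rewrite CA_mul => /mulsgP[z a0 Zz Aa0 ec].
have sAC : <[alpha]> \subset 'C('Z(Q)) by rewrite cycle_subG.
have ca : commute z a0.
  by apply: commute_sym; apply: (centP (subsetP sAC _ Aa0)).
have /setIP[_ Cz] := Zz.
suff a01 : a0 = 1 by rewrite ec a01 mulg1.
apply: alpha_faithful => //; rewrite /commutator gen_subG.
apply/subsetP => _ /imset2P[g y Qg /cycleP[k ->] ->].
have e1 : [~ g, c ^+ k] = [~ g, a0 ^+ k].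
  rewrite ec (expgMn _ ca) commgMJ.
  have /eqP -> : [~ g, z ^+ k] == 1.
    apply/commgP; apply: commute_sym; apply: (centP (groupX k Cz)) => //.
  by rewrite conj1g mulg1.
rewrite -e1; apply: comm_in_Z => //; first exact: groupX.
by rewrite conjXg groupX // stab // (subsetP sQA).
Qed.
End GroupFacts.

Theorem mainTheorem11
  (p q m n : nat)
  (pr_p : prime p) (pr_q : prime q) (odd_p : odd p) (odd_q : odd q) (neq_pq : p != q)
  (hm : least_Sp_index p q m) (hn : least_Sp_index q p n)
  (gT hT : finGroupType)
  (Q A : {group gT}) (alpha : gT)
  (exQ : extraspecial Q) (ordQ : #|Q| = q ^ (m.*2.+1)) (expQ : exponent Q = q)
  (ord_alpha : #[alpha]%g = p) (defA : (Q ><| <[alpha]>)%g = A)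
  (alpha_ZQ : alpha \in 'C('Z(Q))%g) (alpha_faithful : faithful_on_frattini_quot Q alpha)
  (P B : {group hT}) (beta : hT)
  (exP : extraspecial P) (ordP : #|P| = p ^ (n.*2.+1)) (expP : exponent P = p)
  (ord_beta : #[beta]%g = q) (defB : (P ><| <[beta]>)%g = B)
  (beta_ZP : beta \in 'C('Z(P))%g) (beta_faithful : faithful_on_frattini_quot P beta)
  (phi : {morphism ('Z(Q) <*> <[alpha]>)%G >-> hT})
  (iso_phi : isom ('Z(Q) <*> <[alpha]>)%g ('Z(P) <*> <[beta]>)%g phi)
  (X : eqType) (mul : X -> X -> X) (one : X) (inv : X -> X)
  (iA : gT -> X) (iB : hT -> X)
  (amal : is_amalgamated_product A ('Z(Q) <*> <[alpha]>)%g B phi mul one inv iA iB) :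
  (forall x : X, x <> one -> infinite_conj_class mul inv x) /\
  (forall (F : fieldType) (z : seq (F * X)),
      ga_central mul z <-> exists c : F, ga_coef z =1 ga_coef [:: (c, one)]).
Proof.
have [m_gt0 _ _] := hm; have [n_gt0 _ _] := hn.
have sCA := sCA_A defA.
have sCB := sCA_A defB.
have bigA := bigCA pr_q m_gt0 exQ ordQ defA alpha_ZQ.
have bigB := bigCA pr_p n_gt0 exP ordP defB beta_ZP.
have movC : forall c, c \in ('Z(Q) <*> <[alpha]>)%G -> c != 1%g ->
   (exists2 a, a \in A & (c ^ a)%g \notin ('Z(Q) <*> <[alpha]>)%G) \/
   (exists2 b, b \in B & (phi c ^ b)%g \notin ('Z(P) <*> <[beta]>)%G).
  move=> c Cc nc.
  case: (boolP [exists a in A, (c ^ a)%g \notin ('Z(Q) <*> <[alpha]>)%G]).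
    by case/exists_inP => a Aa H; left; exists a.
  rewrite negb_exists_in => /forall_inP H1.
  case: (boolP [exists b in B, (phi c ^ b)%g \notin ('Z(P) <*> <[beta]>)%G]).
    by case/exists_inP => b Bb H; right; exists b.
  rewrite negb_exists_in => /forall_inP H2.
  exfalso; move/negP: nc; apply.
  have Zc : c \in 'Z(Q)%g.
    by apply: (conj_stable_Z defA alpha_ZQ alpha_faithful Cc) => a Aa; have := H1 a Aa; rewrite negbK.
  have Zpc : phi c \in 'Z(P)%g.
    apply: (conj_stable_Z defB beta_ZP beta_faithful (phi_CB iso_phi Cc)) => b Bb.
    by have := H2 b Bb; rewrite negbK.
  have d1 : (#[c]%g %| #|Q|) := order_dvdG (subsetP (center_sub Q) c Zc).
  have d2 : (#[phi c]%g %| #|P|) := order_dvdG (subsetP (center_sub P) _ Zpc).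
  rewrite (order_injm (injphi iso_phi) Cc) in d2.
  have cop : coprime #|Q| #|P|.
    rewrite ordQ ordP coprimeXl // coprimeXr // prime_coprime // dvdn_prime2 //.
    by rewrite eq_sym.
  have : (#[c]%g %| 1) by rewrite -(eqP cop) dvdn_gcd d1 d2.
  by rewrite dvdn1 order_eq1.
have icc := ICC iso_phi sCA sCB amal bigA bigB movC.
split; first exact: icc.
move=> F z; exact: (ga_center (Hg amal) icc).
Qed.
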